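(* Let $K,M,N_c,N_g,Q$ be positive integers with $N_g\le N_c$, let $\rho_{tr}>0$, and for each $k\in\{0,\dots,K-1\}$ let $\boldsymbol{\Omega}_k\in\mathbb{R}^{M\times N_g}$ have non-negative entries, let $\phi_k\in\{0,\dots,QN_c-1\}$, and let $\varrho_k(\cdot)$ be a real-valued function on the integers. Define $\bar{\boldsymbol{\Omega}}_{k}=[\boldsymbol{\Omega}_k\ \ \mathbf{0}_{M\times(N_c-N_g)}]$ and, for integers $n$, $\boldsymbol{\Omega}_{k'}^{n}=\bar{\boldsymbol{\Omega}}_{k'}\boldsymbol{\Pi}_{N_c}^{n}\mathbf{I}_{N_c\times N_g}$. Write $d_{k',k}=\lfloor\phi_{k'}/Q\rfloor-\lfloor\phi_k/Q\rfloor$ and $$D_{k,i,j}=\sum_{k'=0}^{K-1}\delta\big(\langle\phi_{k'}\rangle_Q-\langle\phi_k\rangle_Q\big)\,[\boldsymbol{\Omega}_{k'}^{d_{k',k}}]_{i,j}+\frac{1}{\rho_{tr}Q}.$$ Define $$\epsilon^{CE}_{(Q)}=\sum_{k=0}^{K-1}\sum_{i=0}^{M-1}\sum_{j=0}^{N_g-1}\left\{[\boldsymbol{\Omega}_k]_{i,j}-\frac{[\boldsymbol{\Omega}_k]_{i,j}^2}{D_{k,i,j}}\right\},\qquad \epsilon^{CP}_{(Q)}(\Delta_\ell)=\sum_{k=0}^{K-1}\sum_{i=0}^{M-1}\sum_{j=0}^{N_g-1}\left\{[\boldsymbol{\Omega}_k]_{i,j}-\frac{\varrho_k^2(\Delta_\ell)[\boldsymbol{\Omega}_k]_{i,j}^2}{D_{k,i,j}}\right\}.$$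 Then $$\epsilon^{CE}_{(Q)}\ge\varepsilon^{CE}_{(Q)}=\sum_{k,i,j}\left\{[\boldsymbol{\Omega}_k]_{i,j}-\frac{[\boldsymbol{\Omega}_k]_{i,j}^2}{[\boldsymbol{\Omega}_k]_{i,j}+\frac{1}{\rho_{tr}Q}}\right\},$$ and for every integer $\Delta_\ell$, $$\epsilon^{CP}_{(Q)}(\Delta_\ell)\ge\varepsilon^{CP}_{(Q)}(\Delta_\ell)=\sum_{k,i,j}\left\{[\boldsymbol{\Omega}_k]_{i,j}-\frac{\varrho_k^2(\Delta_\ell)[\boldsymbol{\Omega}_k]_{i,j}^2}{[\boldsymbol{\Omega}_k]_{i,j}+\frac{1}{\rho_{tr}Q}}\right\}$$ (sums over $k\in\{0,\dots,K-1\}$, $i\in\{0,\dots,M-1\}$, $j\in\{0,\dots,N_g-1\}$). Both lower bounds are achieved if, for all $k\neq k'$ with $\langle\phi_k\rangle_Q=\langle\phi_{k'}\rangle_Q$, $$\left(\bar{\boldsymbol{\Omega}}_{k}\boldsymbol{\Pi}_{N_c}^{\lfloor\phi_k/Q\rfloor}\right)\odot\left(\bar{\boldsymbol{\Omega}}_{k'}\boldsymbol{\Pi}_{N_c}^{\lfloor\phi_{k'}/Q\rfloor}\right)=\mathbf{0}.$$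
   Context: Indices start at $0$. $\langle n\rangle_N$ denotes $n$ modulo $N$, $\lfloor\cdot\rfloor$ the floor. $\delta(0)=1$ and $\delta(n)=0$ for integers $n\ne0$. $\boldsymbol{\Pi}_N^{n}=\begin{bmatrix}\mathbf{0}&\mathbf{I}_{N-\langle n\rangle_N}\\ \mathbf{I}_{\langle n\rangle_N}&\mathbf{0}\end{bmatrix}$; $\mathbf{I}_{N\times G}$ is the first $G$ columns of $\mathbf{I}_N$; $\odot$ is the Hadamard product. Interpretation: adjustable phase shift pilots sent over $Q$ consecutive OFDM symbols; $\boldsymbol{\Omega}_k$ is user $k$'s angle-delay channel power matrix, $\phi_k$ its pilot phase shift, $\rho_{tr}$ the pilot SNR, $\varrho_k$ the temporal correlation function; $\epsilon^{CE}_{(Q)}$ and $\epsilon^{CP}_{(Q)}(\Delta_\ell)$ are the sum MSEs of MMSE channel estimation and prediction. *)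

(* Defs.v *)
From HB Require Import structures.
From mathcomp Require Import all_boot all_order all_algebra.
Set Implicit Arguments. Unset Strict Implicit. Unset Printing Implicit Defensive.
Import Order.TTheory GRing.Theory Num.Theory.
Local Open Scope ring_scope.

Section Defs.
Variable R : realFieldType.

Definition modN (n : int) (N : nat) : nat := `|(n %% (N : int))%Z|%N.

(* Pi_N^n = [[0, I_{N-<n>}], [I_{<n>}, 0]], written entrywise (block form) *)
Definition Pi (N : nat) (n : int) : 'M[R]_N :=
  \matrix_(r < N, c < N)
    (let m := modN n N in
     if (r < N - m)%N then ((c : nat) == r + m)%N%:R
     else ((c : nat) == r - (N - m))%N%:R).

Definition Icols (N G : nat) : 'M[R]_(N, G) :=
  \matrix_(i < N, j < G) ((i : nat) == j)%:R.

(* Omega_bar = [Omega  0_{M x (Nc - Ng)}] *)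
Definition Ombar (M Ng Nc : nat) (Om : 'M[R]_(M, Ng)) : 'M[R]_(M, Nc) :=
  \matrix_(i < M, j < Nc)
    (match @insub nat (fun x => (x < Ng)%N) 'I_Ng (val j) with
     | Some j' => Om i j'
     | None => 0 end).

Definition Omn (M Ng Nc : nat) (Om : 'M[R]_(M, Ng)) (n : int) : 'M[R]_(M, Ng) :=
  Ombar Nc Om *m Pi Nc n *m Icols Nc Ng.

Definition dshift (Q : nat) (phi : nat) (phi' : nat) : int :=
  (phi' %/ Q)%:Z - (phi %/ Q)%:Z.

Definition Dkij (K M Ng Nc Q : nat) (rho : R) (Om : 'I_K -> 'M[R]_(M, Ng))
  (phi : 'I_K -> nat) (k : 'I_K) (i : 'I_M) (j : 'I_Ng) : R :=
  \sum_(k' < K) ((phi k' %% Q)%N == (phi k %% Q)%N)%:R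
                 * (Omn Nc (Om k') (dshift Q (phi k) (phi k'))) i j
  + (rho * Q%:R)^-1.

Definition epsCE (K M Ng Nc Q : nat) (rho : R) (Om : 'I_K -> 'M[R]_(M, Ng))
  (phi : 'I_K -> nat) : R :=
  \sum_(k < K) \sum_(i < M) \sum_(j < Ng)
    (Om k i j - (Om k i j) ^+ 2 / Dkij Nc Q rho Om phi k i j).

Definition epsCP (K M Ng Nc Q : nat) (rho : R) (Om : 'I_K -> 'M[R]_(M, Ng))
  (phi : 'I_K -> nat) (vrho : 'I_K -> int -> R) (Dl : int) : R :=
  \sum_(k < K) \sum_(i < M) \sum_(j < Ng)
    (Om k i j - (vrho k Dl) ^+ 2 * (Om k i j) ^+ 2 / Dkij Nc Q rho Om phi k i j).

Definition lbCE (K M Ng : nat) (Q : nat) (rho : R) (Om : 'I_K -> 'M[R]_(M, Ng)) : R :=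
  \sum_(k < K) \sum_(i < M) \sum_(j < Ng)
    (Om k i j - (Om k i j) ^+ 2 / (Om k i j + (rho * Q%:R)^-1)).

Definition lbCP (K M Ng : nat) (Q : nat) (rho : R) (Om : 'I_K -> 'M[R]_(M, Ng))
  (vrho : 'I_K -> int -> R) (Dl : int) : R :=
  \sum_(k < K) \sum_(i < M) \sum_(j < Ng)
    (Om k i j - (vrho k Dl) ^+ 2 * (Om k i j) ^+ 2 / (Om k i j + (rho * Q%:R)^-1)).

Definition hadamard (m n : nat) (A B : 'M[R]_(m, n)) : 'M[R]_(m, n) :=
  map2_mx (fun a b => a * b) A B.

End Defs.

(* Main.v *)
Require Import Defs.
From HB Require Import structures.
From mathcomp Require Import all_boot all_order all_algebra zify ring lra.
Import Order.TTheory GRing.Theory Num.Theory.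
Local Open Scope ring_scope.

Lemma modsub (x y N: nat) : (0<N)%N -> ((x%:Z - y%:Z) %% N%:Z)%Z = (((x %% N + N - y %% N) %% N)%N : int).
Proof. move=> hN.
have ex := divn_eq x N; have ey := divn_eq y N.
have ry : (y %% N < N)%N by rewrite ltn_mod.
have -> : x%:Z - y%:Z = ((x %/ N)%:Z - (y %/ N)%:Z - 1) * N%:Z + (x %% N + N - y %% N)%N%:Z.
  move: ex ey ry. move: (x %/ N)%N (y%/N)%N (x %% N)%N (y %% N)%N => a b c d ex ey ry.
  rewrite ex ey. nia.
by rewrite modzMDl modz_nat.
Qed.

Lemma mod2 (a N : nat) : (a < 2 * N)%N -> (a %% N = if (a < N) then a else a - N)%N.
Proof.
move=> h; case: ifP => h2; first by rewrite modn_small.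
have -> : a = ((a - N) + N)%N by lia.
rewrite modnDr modn_small; lia.
Qed.

Lemma modN_lt (n : int) {N} : (0 < N)%N -> (modN n N < N)%N.
Proof. move=> hN; rewrite /modN. have : (0 <= (n %% N%:Z)%Z < N%:Z)%R by lia. lia. Qed.

Lemma modN_nat (n N : nat) : modN n%:Z N = (n %% N)%N.
Proof. by rewrite /modN modz_nat. Qed.

Section S.
Variable R : realFieldType.

Lemma Pi_entry N n (r c : 'I_N) : Pi R N n r c = ((c : nat) == (r + modN n N) %% N)%N%:R.
Proof.
have hN : (0 < N)%N by case: N r c => [[]|].
have hm := modN_lt n hN.
rewrite /Pi mxE /=. set m := modN n N.
have hr := ltn_ord r; have hc := ltn_ord c.
rewrite (@mod2 (r + m) N); last lia.
case: ifP => h1; case: ifP => h2 //; congr (nat_of_bool _)%:R; apply/eqP/eqP; lia.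
Qed.

Lemma mulPi m N n (A : 'M[R]_(m, N)) i (c : 'I_N) (hN : (0 < N)%N) :
  (A *m Pi R N n) i c = A i (Ordinal (@ltn_pmod (c + N - modN n N) N hN)).
Proof.
rewrite mxE (bigD1 (Ordinal (@ltn_pmod (c + N - modN n N) N hN))) //=.
have hm := modN_lt n hN. have hc := ltn_ord c.
rewrite big1 ?addr0.
  rewrite Pi_entry /=.
  have -> : ((c : nat) == ((c + N - modN n N) %% N + modN n N) %% N)%N = true.
    apply/eqP. rewrite (@mod2 (c + N - modN n N) N); last lia.
    case: ifP => h1; (rewrite (@mod2 (_ + modN n N) N); [case: ifP; lia | lia]).
  by rewrite mulr1.
move=> r hr; rewrite Pi_entry.
case: eqP; last by rewrite mulr0.
move=> e; exfalso; move/eqP: hr; apply; apply: val_inj => /=.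
have hr' := ltn_ord r.
rewrite e (@mod2 (r + modN n N) N); last lia.
case: ifP => h.
  rewrite (@mod2 (r + modN n N + N - modN n N) N); last lia. case: ifP; lia.
rewrite (@mod2 (r + modN n N - N + N - modN n N) N); last lia. case: ifP; lia.
Qed.


Lemma mulIcols m N G (h : (G <= N)%N) (B : 'M[R]_(m, N)) i (j : 'I_G) :
  (B *m Icols R N G) i j = B i (widen_ord h j).
Proof.
rewrite mxE (bigD1 (widen_ord h j)) //= big1 ?addr0.
  by rewrite /Icols mxE eq_refl mulr1.
move=> r hr; rewrite /Icols mxE.
case: eqP; last by rewrite mulr0.
move=> e; exfalso; move/eqP: hr; apply; exact: val_inj.
Qed.

Lemma Ombar_lt M Ng Nc (Om : 'M[R]_(M, Ng)) i (c : 'I_Nc) (hc : (c < Ng)%N) :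
  Ombar Nc Om i c = Om i (Ordinal hc).
Proof.
rewrite /Ombar mxE insubT /=. by congr (Om i _); apply: val_inj.
Qed.

Lemma Ombar_ge0 M Ng Nc (Om : 'M[R]_(M, Ng)) (hOm : forall i j, 0 <= Om i j) i c :
  0 <= Ombar Nc Om i c.
Proof.
rewrite /Ombar mxE. case: insubP => //= *. 
Qed.

Lemma Omn_entry M Ng Nc (Om : 'M[R]_(M, Ng)) n i j (h : (Ng <= Nc)%N) (hNc : (0 < Nc)%N) :
  Omn Nc Om n i j = Ombar Nc Om i (Ordinal (@ltn_pmod (j + Nc - modN n Nc) Nc hNc)).
Proof.
rewrite /Omn (mulIcols _ _ _ h). exact: mulPi.
Qed.

Lemma Omn0 M Ng Nc (Om : 'M[R]_(M, Ng)) i j (h : (Ng <= Nc)%N) (hNc : (0 < Nc)%N) :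
  Omn Nc Om 0 i j = Om i j.
Proof.
rewrite Omn_entry //.
have hj := ltn_ord j.
have e : ((j + Nc - modN 0 Nc) %% Nc = j)%N.
  rewrite /modN modz_nat mod0n subn0 modnDr modn_small //. lia.
have hc : ((j + Nc - modN 0 Nc) %% Nc < Ng)%N by rewrite e.
rewrite (Ombar_lt _ _ _ _ _ (Ordinal (ltn_pmod _ hNc)) hc). congr (Om i _). apply: val_inj => /=. exact: e.
Qed.

End S.
Lemma natid (j m m' N: nat) : (j<N)%N -> (m<N)%N -> (m'<N)%N ->
 ((((j + m) %% N) + N - m') %% N = (j + N - ((m' + N - m) %% N)) %% N)%N.
Proof. move=> *.
rewrite (@mod2 (j+m) N); last lia. rewrite (@mod2 (m'+N-m) N); last lia.
case: ifP => h1; case: ifP => h2; rewrite (@mod2 _ N); try lia; rewrite (@mod2 _ N); try lia;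
 case: ifP; case: ifP; lia.
Qed.
Lemma natid2 (j m N: nat) : (j<N)%N -> (m<N)%N -> ((((j + m) %% N) + N - m) %% N = j)%N.
Proof. move=> *.
rewrite (@mod2 (j+m) N); last lia.
case: ifP => h1; rewrite (@mod2 _ N); try lia; case: ifP; lia.
Qed.

Lemma keyineq (R : realFieldType) (a S c x : R) : 0 <= a -> 0 <= S -> 0 < c -> 0 <= x ->
  x / (a + S + c) <= x / (a + c).
Proof.
move=> ha hS hc hx. apply: ler_wpM2l => //.
rewrite lef_pV2 ?posrE; [|lra|lra]. lra.
Qed.

Theorem proposition5 (R : realFieldType) (K M Nc Ng Q : nat)
  (hK : (0 < K)%N) (hM : (0 < M)%N) (hNc : (0 < Nc)%N) (hNg : (0 < Ng)%N)
  (hQ : (0 < Q)%N) (hNgNc : (Ng <= Nc)%N)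
  (rho : R) (hrho : 0 < rho)
  (Om : 'I_K -> 'M[R]_(M, Ng)) (hOm : forall k i j, 0 <= Om k i j)
  (phi : 'I_K -> nat) (hphi : forall k, (phi k < Q * Nc)%N)
  (vrho : 'I_K -> int -> R) :
  [/\ lbCE Q rho Om <= epsCE Nc Q rho Om phi,
      (forall Dl : int, lbCP Q rho Om vrho Dl <= epsCP Nc Q rho Om phi vrho Dl) &
      ((forall k k' : 'I_K, k != k' -> (phi k %% Q)%N = (phi k' %% Q)%N ->
          hadamard (Ombar Nc (Om k) *m Pi R Nc (phi k %/ Q)%N%:Z)
                   (Ombar Nc (Om k') *m Pi R Nc (phi k' %/ Q)%N%:Z) = 0) ->
       epsCE Nc Q rho Om phi = lbCE Q rho Om /\
       forall Dl : int, epsCP Nc Q rho Om phi vrho Dl = lbCP Q rho Om vrho Dl)].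
Proof.
set c := (rho * Q%:R)^-1.
have hc : 0 < c by rewrite /c invr_gt0 mulr_gt0 // ltr0n.
set S := fun k i j => \sum_(k' < K | k' != k) ((phi k' %% Q)%N == (phi k %% Q)%N)%:R
                 * (Omn Nc (Om k') (dshift Q (phi k) (phi k'))) i j.
have Dsp : forall k i j, Dkij Nc Q rho Om phi k i j = Om k i j + S k i j + c.
  move=> k i j; rewrite /Dkij (bigD1 k) //= eq_refl mul1r /dshift subrr Omn0 //.
have Sge0 : forall k i j, 0 <= S k i j.
  move=> k i j; apply: sumr_ge0 => k' _; apply: mulr_ge0; first exact: ler0n.
  rewrite (Omn_entry _ _ _ _ _ _ _ _ hNgNc hNc). apply: Ombar_ge0 => *; exact: hOm.
split.
- apply: ler_sum => k _; apply: ler_sum => i _; apply: ler_sum => j _.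
  rewrite Dsp; apply: lerB => //; apply: keyineq => //; exact: sqr_ge0.
- move=> Dl.
  apply: ler_sum => k _; apply: ler_sum => i _; apply: ler_sum => j _.
  rewrite Dsp; apply: lerB => //; apply: keyineq => //; apply: mulr_ge0; exact: sqr_ge0.
move=> H.
have S0 : forall k i j, Om k i j != 0 -> S k i j = 0.
  move=> k i j hnz; apply: big1 => k' hk'.
  case: eqP => hmod; last by rewrite mul0r.
  rewrite mul1r.
  have hkk : k != k' by rewrite eq_sym.
  have Hh := H k k' hkk (esym hmod).
  set ak := (phi k %/ Q)%N in Hh *. set ak' := (phi k' %/ Q)%N in Hh *.
  have hm : (ak %% Nc < Nc)%N by rewrite ltn_pmod.
  have hm' : (ak' %% Nc < Nc)%N by rewrite ltn_pmod.
  have hj : (j < Ng)%N := ltn_ord j.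
  pose cc : 'I_Nc := Ordinal (ltn_pmod (j + ak %% Nc) hNc).
  have E : (Ombar Nc (Om k) *m Pi R Nc ak) i cc * (Ombar Nc (Om k') *m Pi R Nc ak') i cc = 0.
    have := congr1 (fun A : 'M[R]_(M, Nc) => A i cc) Hh. rewrite /hadamard /= mxE. move=> ->. by rewrite mxE.
  rewrite (mulPi _ _ _ _ _ _ _ hNc) (mulPi _ _ _ _ _ _ _ hNc) in E.
  have e1 : ((cc + Nc - modN ak Nc) %% Nc = j)%N.
    rewrite /= modN_nat natid2 //; lia.
  have h1 : ((cc + Nc - modN ak Nc) %% Nc < Ng)%N by rewrite e1.
  rewrite (Ombar_lt _ _ _ _ _ _ (Ordinal (ltn_pmod _ hNc)) h1) in E.
  have e2 : Om k i (Ordinal h1) = Om k i j by congr (Om k i _); apply: val_inj.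
  rewrite e2 in E.
  move/eqP: E; rewrite mulf_eq0 (negbTE hnz) /= => /eqP X0.
  rewrite (Omn_entry _ _ _ _ _ _ _ _ hNgNc hNc) -X0.
  congr (Ombar Nc (Om k') i _); apply: val_inj => /=.
  rewrite /dshift /modN modsub // modz_nat /=.
  rewrite [RHS]natid //; try lia.

split.
- apply: eq_bigr => k _; apply: eq_bigr => i _; apply: eq_bigr => j _.
  rewrite Dsp. have [->|hnz] := eqVneq (Om k i j) 0; first by rewrite expr0n /= !mul0r.
  by rewrite S0 // addr0.
move=> Dl.
apply: eq_bigr => k _; apply: eq_bigr => i _; apply: eq_bigr => j _.
rewrite Dsp. have [->|hnz] := eqVneq (Om k i j) 0; first by rewrite expr0n /= mulr0 !mul0r.
by rewrite S0 // addr0.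
Qed.
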